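(* The categories $(\mathcal I_D)_{D}$, where $D$ ranges over all subsemigroups of $(\mathbb N_0,+)$, are pairwise distinct: if $D_1,D_2$ are subsemigroups of $(\mathbb N_0,+)$ with $\mathcal I_{D_1}=\mathcal I_{D_2}$, then $D_1=D_2$.
   Context: A (two-colored) partition $p$ consists of two finite totally ordered sets $U$ (upper row) and $L$ (lower row), a decomposition of the disjoint union $U\sqcup L$ (the points) into non-empty pairwise disjoint blocks, and a coloring of every point by $\circ$ or $\bullet$. A pair partition is one all of whose blocks have two points. Cyclic order and color sum: on the points of $p$ consider the cyclic order obtained by traversing the lower row from left to right, then the upper row from right to left, then returning to the leftmost lower point. For points $\alpha,\beta$, $]\alpha,\beta[$ denotes the points strictly after $\alpha$ and strictly before $\beta$ in this cyclic order, and $]\alpha,\beta]:=]\alpha,\beta[\cup\{\beta\}$ if $\alpha\neq\beta$, $]\alpha,\alpha]:=\emptyset$. The normalized color of a lower point is its color, that of an upper point the opposite color. For a set $S$ of points, $\sigma_p(S)$ is the number of normalized-$\circ$ points in $S$ minus the number of normalized-$\bullet$ points in $S$. Two distinct blocks $B,B'$ cross if there are $\alpha,\beta\in B$, $\gamma,\delta\in B'$ occurring in the cyclic order as $\alpha,\gamma,\beta,\delta$. $\mathcal P^{\circ\bullet}_{2,\mathrm{nb}}$: pair partitions each block of which contains one point of each normalized color. $\mathcal S_0$: those $p\in\mathcal P^{\circ\bullet}_{2,\mathrm{nb}}$ with $\sigma_p(]\alpha,\beta[)=0$ for every block $\{\alpha,\beta\}$. For $p\in\mathcal S_0$ and points $\alpha,\beta$: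 $\delta_p(\alpha,\beta)=\sigma_p(]\alpha,\beta[)$ if they have different normalized colors, $\sigma_p(]\alpha,\beta])$ otherwise; for blocks $B,B'$, $d_p(B,B'):=|\delta_p(\alpha,\alpha')|$ for any $\alpha\in B,\alpha'\in B'$ (independent of the choice). A subsemigroup of $(\mathbb N_0,+)$ is a (possibly empty) subset closed under addition. $\mathcal I_D$ is the set of all $p\in\mathcal S_0$ such that $d_p(B,B')\notin D$ for all pairs of crossing blocks $B,B'$ of $p$. *)

(* Defs.v *)
From mathcomp Require Import all_boot all_order all_algebra.
Set Implicit Arguments. Unset Strict Implicit. Unset Printing Implicit Defensive.
Import Order.TTheory GRing.Theory Num.Theory.

(* A two-colored partition: upper row 'I_nup (points inl i), lower row
   'I_nlo (points inr j), a set of blocks forming a partition (mathcomp's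
   [partition]: covers, pairwise disjoint, no empty block) of all points,
   and a coloring; [col x = true] means x is colored white (\circ). *)
Record tpart := TPart {
  nup : nat;
  nlo : nat;
  blk : {set {set ('I_nup + 'I_nlo)}};
  col : ('I_nup + 'I_nlo) -> bool;
  blk_part : partition blk [set: 'I_nup + 'I_nlo]
}.

Definition pt (p : tpart) : finType := ('I_(nup p) + 'I_(nlo p))%type.

(* position in the cyclic order: lower row left to right (0..nlo-1),
   then upper row right to left (nlo .. nlo+nup-1) *)
Definition pos (p : tpart) (x : pt p) : nat :=
  match x with
  | inl i => nlo p + (nup p - 1 - i)
  | inr j => j
  end.

Definition normcol (p : tpart) (x : pt p) : bool :=
  match x with
  | inl _ => ~~ @col p x
  | inr _ => @col p x
  end.

Definition sigma (p : tpart) (S : {set pt p}) : int :=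
  (#|[set x in S | normcol x]|%:Z - #|[set x in S | ~~ normcol x]|%:Z)%R.

Definition cyc3 (a b c : nat) : bool :=
  [|| (a < b < c), (b < c < a) | (c < a < b)].

Definition oint (p : tpart) (a b : pt p) : {set pt p} :=
  [set g | cyc3 (pos a) (pos g) (pos b)].

Definition ocint (p : tpart) (a b : pt p) : {set pt p} :=
  if a == b then set0 else b |: oint a b.

Definition pair_nb (p : tpart) : bool :=
  [forall B in blk p, (#|B| == 2) &&
     [exists x in B, exists y in B, normcol x != normcol y]].

Definition S0 (p : tpart) : Prop :=
  pair_nb p /\
  forall B, B \in blk p -> forall a b, a \in B -> b \in B -> a != b ->
    sigma (oint a b) = 0%R.

Definition delta (p : tpart) (a b : pt p) : int :=
  if normcol a != normcol b then sigma (oint a b) else sigma (ocint a b).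

Definition dp (p : tpart) (B B' : {set pt p}) : nat :=
  match [pick x in B], [pick y in B'] with
  | Some x, Some y => absz (delta x y)
  | _, _ => 0
  end.

Definition crossing (p : tpart) (B B' : {set pt p}) : Prop :=
  B != B' /\
  exists a b c d, [/\ a \in B, b \in B, c \in B', d \in B' &
    cyc3 (pos a) (pos c) (pos b) && cyc3 (pos b) (pos d) (pos a)].

Definition subsemigroup (D : nat -> Prop) : Prop :=
  forall m n, D m -> D n -> D (m + n).

Definition in_ID (D : nat -> Prop) (p : tpart) : Prop :=
  S0 p /\
  forall B B', B \in blk p -> B' \in blk p -> crossing B B' -> ~ D (dp B B').

(* Main.v *)
Require Import Defs.
From mathcomp Require Import all_boot all_order all_algebra.
From mathcomp Require Import zify.
From Stdlib Require Import ClassicalEpsilon Classical_Prop.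
Set Implicit Arguments. Unset Strict Implicit. Unset Printing Implicit Defensive.
Import Order.TTheory GRing.Theory Num.Theory.

Lemma hlp1 (x : int) : 1%R = (x + 1%:Z - (x + 0%:Z))%R.
Proof. by rewrite addr0 addrAC subrr add0r. Qed.
Lemma hlp2 (x : int) : (-1)%R = (x + 0%:Z - (x + 1%:Z))%R.
Proof. by rewrite addr0 opprD addrA subrr add0r. Qed.

Lemma hlp3 (x y c : int) : ((x + c) - (y + c) = x - y)%R.
Proof. by rewrite opprD addrACA subrr addr0. Qed.

Section Generic.
Variables (N : nat) (colf : nat -> bool) (lev : nat -> nat) (f : nat -> int) (pn : nat -> nat).
Hypothesis f0 : f 0 = 0%R.
Hypothesis fN : f N = 0%R.
Hypothesis fS1 : forall x, x < N -> f x = ((lev x)%:Z + (~~ colf x : nat)%:Z)%R.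
Hypothesis fS2 : forall x, x < N -> f x.+1 = ((lev x)%:Z + (colf x : nat)%:Z)%R.
Hypothesis pn_lt : forall x, x < N -> pn x < N.
Hypothesis pn_inv : forall x, x < N -> pn (pn x) = x.
Hypothesis pn_neq : forall x, x < N -> pn x != x.
Hypothesis pn_col : forall x, x < N -> colf (pn x) = ~~ colf x.
Hypothesis pn_lev : forall x, x < N -> lev (pn x) = lev x.

Definition P := ('I_0 + 'I_N)%type.
Definition partner (x : P) : P :=
  match x with inl i => inl i | inr j => inr (Ordinal (pn_lt (ltn_ord j))) end.

Lemma partnerK x : partner (partner x) = x.
Proof. case: x => [i|j] //=; congr inr; apply: val_inj => /=; exact: pn_inv. Qed.

Definition R (x y : P) : bool := (y == x) || (y == partner x).

Lemma R_equiv : {in [set: P] & &, equivalence_rel R}.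
Proof.
move=> x y z _ _ _; split; first by rewrite /R eqxx.
rewrite /R => /orP[/eqP->|/eqP->] //.
rewrite partnerK; by rewrite orbC.
Qed.

Definition blkP := equivalence_partition R [set: P].
Lemma blkP_part : partition blkP [set: 'I_0 + 'I_N].
Proof. exact: equivalence_partitionP R_equiv. Qed.

Definition colP (x : P) : bool := match x with inl _ => false | inr j => colf j end.

Definition pp : tpart := @TPart 0 N blkP colP blkP_part.

Lemma blk_inv (B : {set pt pp}) : B \in blk pp -> exists x : 'I_N,
  forall y : pt pp, (y \in B) = (y == inr x) || (y == partner (inr x)).
Proof.
move=> /imsetP [[[i Hi]|x] _ ->] //; exists x => y; by rewrite !inE.
Qed.

Local Open Scope ring_scope.
Definition sN (j : nat) : int := if colf j then 1 else -1.

Lemma sigmaE (S : {set pt pp}) :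
  sigma S = \sum_(x in S) (if normcol x then 1 else -1).
Proof.
rewrite /sigma (bigID (fun x => normcol x)) /=.
congr (_ + _).
  rewrite (eq_bigr (fun=> 1)); last by move=> x /andP[_ ->].
  rewrite (eq_bigl (fun x => x \in [set x in S | normcol x])); last by move=> x; rewrite !inE.
  by rewrite sumr_const natz.
rewrite (eq_bigr (fun=> -1)); last by move=> x /andP[_ /negbTE ->].
rewrite (eq_bigl (fun x => x \in [set x in S | ~~ normcol x])); last by move=> x; rewrite !inE.
by rewrite sumr_const mulNrn natz.
Qed.

Lemma sigma_sum (S : {set pt pp}) (Q : nat -> bool) :
  (forall j : 'I_N, (inr j \in S) = Q j) ->
  sigma S = \sum_(0 <= j < N) (if Q j then sN j else 0).
Proof.
move=> HQ; rewrite sigmaE big_mkcond /= big_sumType /= big_ord0 add0r big_mkord.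
apply: eq_bigr => j _; by rewrite HQ.
Qed.

Lemma tel m n : (m <= n)%N -> (n <= N)%N -> \sum_(m <= j < n) sN j = f n - f m.
Proof.
move=> Hmn HnN; apply: telescope_sumr_eq => // k /andP[_ Hk].
have HkN : (k < N)%N by apply: leq_trans Hk HnN.
rewrite fS2 // fS1 // /sN; case: (colf k) => /=; [exact: hlp1 | exact: hlp2].
Qed.

Lemma sNE j : (j < N)%N -> sN j = f j.+1 - f j.
Proof. move=> Hj; rewrite fS2 // fS1 // /sN; case: (colf j) => /=; [exact: hlp1 | exact: hlp2]. Qed.

Lemma sum_zero m n (Q : nat -> bool) : (forall j, (m <= j < n)%N -> Q j = false) ->
  \sum_(m <= j < n) (if Q j then sN j else 0) = 0.
Proof.
move=> H; rewrite big_nat_cond big1 // => j /andP[Hj _]; by rewrite H.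
Qed.

Lemma sum_one m n (Q : nat -> bool) : (forall j, (m <= j < n)%N -> Q j = true) ->
  \sum_(m <= j < n) (if Q j then sN j else 0) = \sum_(m <= j < n) sN j.
Proof. move=> H; apply: eq_big_nat => j Hj; by rewrite H. Qed.

Lemma sum_cyc (a b : nat) : (a < N)%N -> (b < N)%N -> a != b ->
  \sum_(0 <= j < N) (if cyc3 a j b then sN j else 0) = f b - f a.+1.
Proof.
move=> Ha Hb Hab; case: (ltngtP a b) => Hlt; last by rewrite Hlt eqxx in Hab.
- rewrite (big_cat_nat (n:=a.+1)) //=.
  rewrite (big_cat_nat (m:=a.+1) (n:=b)) //=; try lia.
  rewrite sum_zero; last by move=> j Hj; rewrite /cyc3; lia.
  rewrite sum_one; last by move=> j Hj; rewrite /cyc3; lia.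
  rewrite (sum_zero (m:=b)); last by move=> j Hj; rewrite /cyc3; lia.
  rewrite tel //; [by rewrite add0r addr0 | lia].
- rewrite (big_cat_nat (n:=b)) //=; try lia.
  rewrite (big_cat_nat (m:=b) (n:=a.+1)) //=; try lia.
  rewrite sum_one; last by move=> j Hj; rewrite /cyc3; lia.
  rewrite sum_zero; last by move=> j Hj; rewrite /cyc3; lia.
  rewrite sum_one; last by move=> j Hj; rewrite /cyc3; lia.
  rewrite !tel //; try lia.
Qed.


Lemma ptE (z : pt pp) : exists j : 'I_N, z = inr j.
Proof. case: z => [[i Hi]|j] //; by exists j. Qed.

Lemma sigma0 : sigma (set0 : {set pt pp}) = 0.
Proof. by rewrite sigmaE big_set0. Qed.

Lemma sigma_oint (a b : 'I_N) : a != b ->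
  sigma (oint (inr a : pt pp) (inr b)) = f b - f a.+1.
Proof.
move=> Hab; rewrite (@sigma_sum _ (fun j => cyc3 a j b)); last by move=> j; rewrite inE.
by apply: sum_cyc.
Qed.

Lemma sigma_ocint (a b : 'I_N) : a != b ->
  sigma (ocint (inr a : pt pp) (inr b)) = f b.+1 - f a.+1.
Proof.
move=> Hab; rewrite /ocint.
have -> : ((inr a : pt pp) == inr b) = false by apply/negbTE; apply: contra Hab => /eqP [->].
rewrite sigmaE big_setU1 /=; last by rewrite inE /cyc3; lia.
rewrite -sigmaE sigma_oint //.
by rewrite -/(sN b) sNE // addrA subrK.
Qed.

Lemma delta_abs (a b : 'I_N) :
  absz (delta (inr a : pt pp) (inr b)) = absz ((lev b)%:Z - (lev a)%:Z).
Proof.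
case: (eqVneq a b) => [->|Hab].
  by rewrite /delta /= eqxx /= /ocint eqxx sigma0 subrr.
have Ha := ltn_ord a; have Hb := ltn_ord b.
rewrite /delta /=; case Ca: (colf a); case Cb: (colf b) => /=;
  rewrite ?sigma_oint ?sigma_ocint // ?fS2 ?fS1 // ?Ca ?Cb /= hlp3 //.
Qed.

Definition levp (z : P) : nat := match z with inl _ => 0%N | inr j => lev j end.

Lemma levp_partner z : levp (partner z) = levp z.
Proof. case: z => [i|j] //=; exact: pn_lev. Qed.

Lemma delta_absp (u v : pt pp) :
  absz (delta u v) = absz ((levp v)%:Z - (levp u)%:Z).
Proof. have [a ->] := ptE u; have [b ->] := ptE v; exact: delta_abs. Qed.

Lemma B_eq (B : {set pt pp}) : B \in blk pp ->
  exists x : 'I_N, B = [set inr x; partner (inr x)].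
Proof.
move=> /blk_inv [x Hx]; exists x; apply/setP => y; by rewrite Hx !inE.
Qed.

Lemma B_lev (B : {set pt pp}) u v : B \in blk pp -> u \in B -> v \in B -> levp u = levp v.
Proof.
move=> /B_eq [x ->]; rewrite !inE => /orP[]/eqP-> /orP[]/eqP->;
  by rewrite ?levp_partner.
Qed.

Lemma dp_eq (B B' : {set pt pp}) x y : B \in blk pp -> B' \in blk pp ->
  x \in B -> y \in B' -> dp B B' = absz ((levp y)%:Z - (levp x)%:Z).
Proof.
move=> HB HB' Hx Hy; rewrite /dp.
case: pickP => [u Hu|H]; last by rewrite H in Hx.
case: pickP => [v Hv|H]; last by rewrite H in Hy.
by rewrite delta_absp (B_lev HB Hu Hx) (B_lev HB' Hv Hy).
Qed.

Lemma neq_partner (x : 'I_N) : (inr x : pt pp) != partner (inr x).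
Proof.
apply/negP => /eqP [] /(congr1 val) /= H.
by move: (pn_neq (ltn_ord x)); rewrite -H eqxx.
Qed.

Lemma sigma_partner (z : pt pp) : sigma (oint z (partner z)) = 0.
Proof.
have [u ->] := ptE z; have Hu := ltn_ord u.
rewrite /= sigma_oint /=; last first.
  apply/negP => /eqP/(congr1 val) /= H.
  by move: (pn_neq Hu); rewrite -H eqxx.
rewrite fS2 // fS1 ?pn_lt // pn_col // pn_lev // negbK subrr //.
Qed.

Lemma S0_pp : S0 pp.
Proof.
split.
  apply/forallP => B; apply/implyP => /B_eq [x ->].
  have Hx := ltn_ord x.
  rewrite cards2 /=.
  rewrite neq_partner.
  rewrite /=; apply/existsP; exists (inr x); rewrite !inE eqxx /=.
  apply/existsP; exists (partner (inr x)); rewrite !inE eqxx orbT /=.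
  by rewrite pn_col // ; case: (colf x).
move=> B /B_eq [x ->] a b; rewrite !inE => /orP[]/eqP-> /orP[]/eqP-> //; rewrite ?eqxx //.
  move=> _; exact: sigma_partner.
move=> _; have := sigma_partner (partner (inr x)); by rewrite partnerK.
Qed.

Lemma cyc3_neq u v w : cyc3 u v w -> [/\ u != v, v != w & u != w].
Proof. rewrite /cyc3 => H; split; apply/eqP => E; subst; lia. Qed.

Lemma pair_mem (x z w : pt pp) : z \in [set x; partner x] -> w \in [set x; partner x] ->
  z != w -> w = partner z.
Proof.
rewrite !inE => /orP[]/eqP-> /orP[]/eqP->; rewrite ?eqxx // ?partnerK //.
Qed.

Lemma cross_elim (B B' : {set pt pp}) : B \in blk pp -> B' \in blk pp -> crossing B B' ->
  exists a c : 'I_N, (cyc3 a c (pn a) && cyc3 (pn a) (pn c) a) /\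
     dp B B' = absz ((lev c)%:Z - (lev a)%:Z).
Proof.
move=> HB HB' [_ [a [b [c [d [Ha Hb Hc Hd /andP[H1 H2]]]]]]].
have Hdp := dp_eq HB HB' Ha Hc.
have [x Ex] := B_eq HB; have [y Ey] := B_eq HB'.
rewrite Ex in Ha Hb; rewrite Ey in Hc Hd.
have Hab : a != b by apply/eqP => E; subst; case: (cyc3_neq H1); rewrite eqxx.
have Hcd : c != d.
  apply/eqP => E; subst; move: H1 H2; rewrite /cyc3; lia.
have Eb := pair_mem Ha Hb Hab; have Ed := pair_mem Hc Hd Hcd.
subst b d.
have [a' Ea] := ptE a; have [c' Ec] := ptE c; subst a c.
exists a', c'; split; first by rewrite /= in H1 H2; rewrite H1 H2.
by rewrite Hdp.
Qed.

Lemma blk_mem (x : 'I_N) : [set (inr x : pt pp); partner (inr x)] \in blk pp.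
Proof.
apply/imsetP; exists (inr x); first by rewrite inE.
apply/setP => y; by rewrite !inE.
Qed.

Lemma cross_intro (a c : 'I_N) : cyc3 a c (pn a) && cyc3 (pn a) (pn c) a ->
  exists B B' : {set pt pp}, [/\ B \in blk pp, B' \in blk pp, crossing B B' &
     dp B B' = absz ((lev c)%:Z - (lev a)%:Z)].
Proof.
move=> /andP[H1 H2].
exists [set (inr a : pt pp); partner (inr a)], [set (inr c : pt pp); partner (inr c)].
have HB := blk_mem a; have HB' := blk_mem c.
split => //.
- split.
    apply/negP => /eqP E.
    have : (inr c : pt pp) \in [set (inr c : pt pp); partner (inr c)] by rewrite !inE eqxx.
    rewrite -E !inE /=; case: (cyc3_neq H1) => Hac Hcp _.
    apply/negP; rewrite negb_or; apply/andP; split.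
      by apply: contra Hac => /eqP [->].
    by apply: contra Hcp => /eqP [/(congr1 val) /= ->].
  exists (inr a), (partner (inr a)), (inr c), (partner (inr c)).
  split; rewrite ?inE ?eqxx ?orbT //=.
  by rewrite H1 H2.
- by rewrite (dp_eq HB HB' (x := inr a) (y := inr c)) // !inE eqxx.
Qed.

Lemma in_ID_pp (D : nat -> Prop) :
  (forall a c : 'I_N, cyc3 a c (pn a) && cyc3 (pn a) (pn c) a ->
     ~ D (absz ((lev c)%:Z - (lev a)%:Z))) -> in_ID D pp.
Proof.
move=> H; split; first exact: S0_pp.
move=> B B' HB HB' Hc; have [a [c [Hac ->]]] := cross_elim HB HB' Hc; exact: H Hac.
Qed.

Lemma not_in_ID_pp (D : nat -> Prop) (a c : 'I_N) :
  cyc3 a c (pn a) && cyc3 (pn a) (pn c) a ->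
  D (absz ((lev c)%:Z - (lev a)%:Z)) -> ~ in_ID D pp.
Proof.
move=> Hac HD [_ H]; have [B [B' [HB HB' Hc Hdp]]] := cross_intro Hac.
by apply: (H B B' HB HB' Hc); rewrite Hdp.
Qed.

End Generic.


Ltac simp_if := repeat match goal with |- context [if ?b then _ else _] =>
  lazymatch b with context [if _ then _ else _] => fail | _ => let H := fresh "H" in case H: b end end.

Section Inst.
Variables (k : nat) (t : nat -> bool).
Definition levI x := if x < k then x else if x < 2*k then 2*k-1-x else if x < 3*k then x-2*k else 4*k-1-x.
Definition colI x := (x < k) || ((2*k <= x) && (x < 3*k)).
Definition fnat x := if x <= k then x else if x <= 2*k then 2*k - x else if x <= 3*k then x - 2*k else 4*k - x.
Definition pnI x := if t (levI x) then 4*k-1-x else if x < 2*k then 2*k-1-x else 6*k-1-x.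

Lemma reg x : x < 4*k ->
 (x < k /\ levI x = x /\ fnat x = x /\ fnat x.+1 = x.+1) \/
 (k <= x < 2*k /\ levI x = 2*k-1-x /\ fnat x = 2*k - x /\ fnat x.+1 = 2*k-1-x) \/
 (2*k <= x < 3*k /\ levI x = x - 2*k /\ fnat x = x-2*k /\ fnat x.+1 = x.+1-2*k) \/
 (3*k <= x /\ levI x = 4*k-1-x /\ fnat x = 4*k-x /\ fnat x.+1 = 4*k-1-x).
Proof. move=> Hx; rewrite /levI /fnat; simp_if; lia. Qed.

Lemma colI_reg x : colI x = (x < k) || ((2*k <= x) && (x < 3*k)).
Proof. by []. Qed.

Lemma pnI_lt x : x < 4*k -> pnI x < 4*k.
Proof. move=> Hx; rewrite /pnI; simp_if; lia. Qed.

Lemma pnI_lev x : x < 4*k -> levI (pnI x) = levI x.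
Proof. move=> Hx; rewrite /pnI; case: (t (levI x)); simp_if; rewrite /levI; simp_if; lia. Qed.

Lemma pnI_inv x : x < 4*k -> pnI (pnI x) = x.
Proof.
move=> Hx; rewrite {1}/pnI pnI_lev //; rewrite /pnI; case: (t (levI x)); simp_if; lia.
Qed.

Lemma pnI_neq x : x < 4*k -> pnI x != x.
Proof. move=> Hx; rewrite /pnI; case: (t (levI x)); simp_if; lia. Qed.

Lemma pnI_col x : x < 4*k -> colI (pnI x) = ~~ colI x.
Proof. move=> Hx; rewrite /colI /pnI; case: (t (levI x)); simp_if; lia. Qed.

Lemma fnat0 : fnat 0 = 0.
Proof. rewrite /fnat; simp_if; lia. Qed.

Lemma fnatN : fnat (4*k) = 0.
Proof. rewrite /fnat; simp_if; lia. Qed.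

Lemma fnatS1 x : x < 4*k -> fnat x = levI x + ~~ colI x.
Proof.
move=> Hx; have := reg Hx; case C: (colI x); rewrite /colI in C => /=; lia.
Qed.

Lemma fnatS2 x : x < 4*k -> fnat x.+1 = levI x + colI x.
Proof.
move=> Hx; have := reg Hx; case C: (colI x); rewrite /colI in C => /=; lia.
Qed.

Lemma levI_lt x : x < 4*k -> levI x < k.
Proof. move=> Hx; have := reg Hx; lia. Qed.

Lemma crossI a c : a < 4*k -> c < 4*k -> cyc3 a c (pnI a) && cyc3 (pnI a) (pnI c) a ->
  (t (levI c) && ~~ t (levI a) && (levI a < levI c)) ||
  (t (levI a) && ~~ t (levI c) && (levI c < levI a)).
Proof.
move=> Ha Hc.
have Hne : t (levI a) != t (levI c) -> levI a != levI c by apply: contra => /eqP ->.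
rewrite /pnI; move: Hne; case: (t (levI a)); case: (t (levI c)) => /= Hne;
have Ra := reg Ha; have Rc := reg Hc;
(case: Ra => [[Ra1 [La _]]|[[Ra1 [La _]]|[[Ra1 [La _]]|[Ra1 [La _]]]]]);
(case: Rc => [[Rc1 [Lc _]]|[[Rc1 [Lc _]]|[[Rc1 [Lc _]]|[Rc1 [Lc _]]]]]);
rewrite ?La ?Lc in Hne *; simp_if; rewrite /cyc3; lia.
Qed.

End Inst.


Definition col0 (x : nat) := ~~ odd x.
Definition lev0 (x : nat) := 0%N.
Definition f0f (x : nat) : int := (odd x : nat)%:Z.
Definition pn0 (x : nat) := if x < 3 then x + 3 else x - 3.

Lemma h0_f0 : f0f 0 = 0%R. Proof. by []. Qed.
Lemma h0_fN : f0f 6 = 0%R. Proof. by []. Qed.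
Lemma h0_fS1 x : x < 6 -> f0f x = ((lev0 x)%:Z + (~~ col0 x : nat)%:Z)%R.
Proof. by move=> _; rewrite /f0f /col0 /lev0 negbK add0r. Qed.
Lemma h0_fS2 x : x < 6 -> f0f x.+1 = ((lev0 x)%:Z + (col0 x : nat)%:Z)%R.
Proof. by move=> _; rewrite /f0f /col0 /lev0 add0r. Qed.
Lemma pn0_lt x : x < 6 -> pn0 x < 6.
Proof. by case: x => [|[|[|[|[|[|x]]]]]]. Qed.
Lemma pn0_inv x : x < 6 -> pn0 (pn0 x) = x.
Proof. by case: x => [|[|[|[|[|[|x]]]]]]. Qed.
Lemma pn0_neq x : x < 6 -> pn0 x != x.
Proof. by case: x => [|[|[|[|[|[|x]]]]]]. Qed.
Lemma pn0_col x : x < 6 -> col0 (pn0 x) = ~~ col0 x.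
Proof. by case: x => [|[|[|[|[|[|x]]]]]]. Qed.
Lemma pn0_lev x : x < 6 -> lev0 (pn0 x) = lev0 x.
Proof. by []. Qed.

Lemma dir (D1 D2 : nat -> Prop) : subsemigroup D2 ->
  (forall p, in_ID D2 p -> in_ID D1 p) -> forall n, D1 n -> D2 n.
Proof.
move=> S2 H n H1; apply: NNPP => H2.
case: n H1 H2 => [|m] H1 H2.
- have HI : in_ID D2 (pp (N:=6) col0 (pn:=pn0) pn0_lt pn0_inv).
    apply: (@in_ID_pp 6 col0 lev0 f0f pn0 h0_f0 h0_fN h0_fS1 h0_fS2 pn0_lt pn0_inv pn0_neq pn0_col pn0_lev).
    by move=> a c _; rewrite /lev0 subrr.
  apply: (@not_in_ID_pp 6 col0 lev0 f0f pn0 h0_f0 h0_fN h0_fS1 h0_fS2 pn0_lt pn0_inv pn0_lev D1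
            (Ordinal (isT : 0 < 6)) (Ordinal (isT : 1 < 6))) (H _ HI) => //.
- set n := m.+1; set k := n.+1.
  pose t := fun L => if excluded_middle_informative (L = n \/ D2 (n - L)) then true else false.
  have tT : forall L, t L = true -> L = n \/ D2 (n - L).
    by move=> L; rewrite /t; case: excluded_middle_informative.
  have tF : forall L, t L = false -> ~ (L = n \/ D2 (n - L)).
    by move=> L; rewrite /t; case: excluded_middle_informative.
  pose f := fun x => Posz (fnat k x).
  have hf0 : f 0 = 0%R by rewrite /f fnat0.
  have hfN : f (4 * k) = 0%R by rewrite /f fnatN.
  have hfS1 : forall x, x < 4 * k -> f x = (Posz (levI k x) + Posz (~~ colI k x : nat))%R.
    by move=> x Hx; rewrite /f fnatS1 // PoszD.
  have hfS2 : forall x, x < 4 * k -> f x.+1 = (Posz (levI k x) + Posz (colI k x : nat))%R.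
    by move=> x Hx; rewrite /f fnatS2 // PoszD.
  have HI : in_ID D2 (pp (N:=4*k) (colI k) (pn:=pnI k t) (@pnI_lt k t) (@pnI_inv k t)).
    apply: (@in_ID_pp (4*k) (colI k) (levI k) f (pnI k t) hf0 hfN hfS1 hfS2
               (@pnI_lt k t) (@pnI_inv k t) (@pnI_neq k t) (@pnI_col k t) (@pnI_lev k t)).
    move=> a c Hac.
    have Ha := levI_lt (ltn_ord a); have Hc := levI_lt (ltn_ord c).
    case/orP: (crossI (ltn_ord a) (ltn_ord c) Hac) => /andP[/andP[T1 T2] Hlt].
    + rewrite distnEl; last by apply: ltnW.
      move/negbTE: T2 => /tF T2; case: (tT _ T1) => [E|Dc].
        rewrite E => HD; apply: T2; by right.
      move=> HD; apply: T2; right.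
      have := S2 _ _ Dc HD.
      have -> : (n - levI k c + (levI k c - levI k a) = n - levI k a)%N by lia.
      done.
    + rewrite distnEr; last by apply: ltnW.
      move/negbTE: T2 => /tF T2; case: (tT _ T1) => [E|Dc].
        rewrite E => HD; apply: T2; by right.
      move=> HD; apply: T2; right.
      have := S2 _ _ Dc HD.
      have -> : (n - levI k a + (levI k a - levI k c) = n - levI k c)%N by lia.
      done.
  have H0 : 0 < 4 * k by lia.
  have Hn : n < 4 * k by lia.
  have t0 : t 0 = false.
    rewrite /t; case: excluded_middle_informative => // -[E|HD] //; by rewrite subn0 in HD.
  have tn : t n = true.
    rewrite /t; case: excluded_middle_informative => // HN; exfalso; apply: HN; by left.
  have lev0E : levI k 0 = 0 by rewrite /levI.
  have levnE : levI k n = n by rewrite /levI ifT //.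
  apply: (@not_in_ID_pp (4*k) (colI k) (levI k) f (pnI k t) hf0 hfN hfS1 hfS2
             (@pnI_lt k t) (@pnI_inv k t) (@pnI_lev k t) D1
             (Ordinal H0) (Ordinal Hn)) (H _ HI) => /=.
    rewrite /pnI lev0E levnE t0 tn /cyc3.
    have -> : (0 < 2 * k) = true by lia.
    lia.
  by rewrite levnE addn0.
Qed.

Theorem theorem1 (D1 D2 : nat -> Prop) :
  subsemigroup D1 -> subsemigroup D2 ->
  (forall p : tpart, in_ID D1 p <-> in_ID D2 p) ->
  forall n, D1 n <-> D2 n.
Proof.
move=> S1 S2 H n; split.
  by apply: dir => // p /H.
by apply: dir => // p /H.
Qed.
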